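(* Let $M,M'\in\mathrm{Mat}(2,\mathbb{Z})$ have the same trace, the same determinant and the same $\mathrm{mgcd}$. Then for every $n\in\mathbb{N}$, the pretail trees of the fixed point $0$ under the actions $x\mapsto Mx\bmod n$ and $x\mapsto M'x\bmod n$ on $(\mathbb{Z}/n\mathbb{Z})^2$ are isomorphic (as rooted trees).
   Context: For $M=\begin{pmatrix}a&b\\c&d\end{pmatrix}$, $\mathrm{mgcd}(M)=\gcd(b,c,d-a)$. A point $y$ is periodic if $M^ky\equiv y\pmod n$ for some $k\ge1$. A pretail of $0$ is a set $\{x,Mx,\dots,M^jx=0\}$ (mod $n$) in which $0$ is the only periodic point. The pretail tree of $0$ is the rooted tree with root $0$ whose vertices are the points of all pretails of $0$, with $x\ne0$ a child of $Mx$. *)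

(* Defs.v *)
From mathcomp Require Import all_boot all_order all_algebra.
Set Implicit Arguments. Unset Strict Implicit. Unset Printing Implicit Defensive.
Import GRing.Theory Num.Theory.
Local Open Scope ring_scope.

(* Points of (Z/nZ)^2 are represented by pairs of integers in [0, n). *)
Definition pt := (int * int)%type.

Definition i0 : 'I_2 := ord0.
Definition i1 : 'I_2 := ord_max.

Definition mgcd (M : 'M[int]_2) : int :=
  gcdz (gcdz (M i0 i1) (M i1 i0)) (M i1 i1 - M i0 i0).

Definition act (M : 'M[int]_2) (n : nat) (x : pt) : pt :=
  (((M i0 i0 * x.1 + M i0 i1 * x.2) %% n%:Z)%Z,
   ((M i1 i0 * x.1 + M i1 i1 * x.2) %% n%:Z)%Z).

Definition inZn2 (n : nat) (x : pt) : Prop :=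
  (0 <= x.1 < n%:Z) /\ (0 <= x.2 < n%:Z).

Definition zero_pt : pt := (0, 0).

Definition periodic (M : 'M[int]_2) (n : nat) (y : pt) : Prop :=
  exists k : nat, (1 <= k)%N /\ iter k (act M n) y = y.

Definition pretail_vertex (M : 'M[int]_2) (n : nat) (x : pt) : Prop :=
  inZn2 n x /\
  exists j : nat, iter j (act M n) x = zero_pt /\
    forall i : nat, (i <= j)%N ->
      periodic M n (iter i (act M n) x) -> iter i (act M n) x = zero_pt.

(* Isomorphism of the rooted pretail trees of 0: a bijection between the
   vertex sets sending the root 0 to the root 0 and commuting with the parent
   map (the parent of a vertex x <> 0 is M x). *)
Definition pretail_trees_isomorphic (M M' : 'M[int]_2) (n : nat) : Prop :=
  exists phi : pt -> pt,
    [/\ forall x, pretail_vertex M n x -> pretail_vertex M' n (phi x),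
        forall x y, pretail_vertex M n x -> pretail_vertex M n y ->
                    phi x = phi y -> x = y,
        forall y, pretail_vertex M' n y ->
                  exists2 x, pretail_vertex M n x & phi x = y,
        phi zero_pt = zero_pt &
        forall x, pretail_vertex M n x -> x <> zero_pt ->
                  phi (act M n x) = act M' n (phi x)].

(* Main.v *)
Require Import Defs.
From mathcomp Require Import all_boot all_order all_algebra ring zify.
Set Implicit Arguments. Unset Strict Implicit. Unset Printing Implicit Defensive.
Import GRing.Theory Num.Theory.
Local Open Scope ring_scope.

Lemma dvdn_part_prime (pi : nat_pred) (n p : nat) : (0 < n)%N -> prime p -> (p %| n)%N ->
  (p %| n`_pi)%N = (p \in pi).
Proof.
move=> n0 pp pn; have := pi_of_part pi n0 p.
by rewrite !inE !mem_primes pp part_gt0 n0 pn /=.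
Qed.

Lemma cyc (r e q : int) (n : nat) : (0 < n)%N ->
  (forall p : nat, prime p -> (p%:Z %| r)%Z -> (p%:Z %| q)%Z -> (p%:Z %| e)%Z -> False) ->
  exists x y : int, coprime (absz (r*x*x + e*x*y - q*y*y)%R) n.
Proof.
move=> n0 prim.
pose piY : nat_pred := [pred p | ~~ (p %| `|r|)%N].
pose piX : nat_pred := [pred p | (p %| `|r|)%N && ~~ (p %| `|q|)%N].
exists (n`_piX)%:Z, (n`_piY)%:Z.
set x := (n`_piX)%:Z; set y := (n`_piY)%:Z.
apply/eqP; apply: contraTeq (isT : true) => H.
have d0 : (0 < gcdn (absz (r*x*x + e*x*y - q*y*y)%R) n)%N by rewrite gcdn_gt0 n0 orbT.
have d1 : (1 < gcdn (absz (r*x*x + e*x*y - q*y*y)%R) n)%N.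
  by move: d0 H; case: (gcdn _ _) => [|[|]].
have [p pp pd] := pdivP d1.
have pn : (p %| n)%N := dvdn_trans pd (dvdn_gcdr _ _).
have pF : (p%:Z %| r*x*x + e*x*y - q*y*y)%Z := dvdn_trans pd (dvdn_gcdl _ _).
have kx : (p%:Z %| x)%Z = (p \in piX) by rewrite dvdzE /= dvdn_part_prime.
have ky : (p%:Z %| y)%Z = (p \in piY) by rewrite dvdzE /= dvdn_part_prime.
have Eu : forall a b : int, (p%:Z %| a * b)%Z = (p%:Z %| a)%Z || (p%:Z %| b)%Z.
  by move=> a b; rewrite !dvdzE abszM Euclid_dvdM.
have hr : (p%:Z %| r)%Z = (p %| `|r|)%N by [].
have hq : (p%:Z %| q)%Z = (p %| `|q|)%N by [].
rewrite !inE in kx ky.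
case Hr: (p %| `|r|)%N kx ky => /= kx ky.
  case Hq: (p %| `|q|)%N kx ky => /= kx ky.
    have : (p%:Z %| e * x * y)%Z.
      have -> : e * x * y = (r*x*x + e*x*y - q*y*y) - (r * x * x - q * y * y) by ring.
      apply: rpredB => //; apply: rpredB; do 2 apply: dvdz_mulr; by rewrite ?hr ?hq.
    rewrite !Eu kx ky !orbF => pe.
    by have := prim p pp; rewrite hr hq Hr Hq pe; move/(_ isT isT isT).
  have : (p%:Z %| q * y * y)%Z.
    have -> : q * y * y = - ((r*x*x + e*x*y - q*y*y) - x * (r * x + e * y)) by ring.
    by rewrite rpredN; apply: rpredB => //; apply: dvdz_mulr; rewrite kx.
  by rewrite !Eu hq ky Hq.
have : (p%:Z %| r * x * x)%Z.
  have -> : r * x * x = (r*x*x + e*x*y - q*y*y) - (e * x - q * y) * y by ring.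
  by apply: rpredB => //; apply: dvdz_mull; rewrite ky.
by rewrite !Eu hr kx Hr.
Qed.
Lemma ord2P (i : 'I_2) : i = i0 \/ i = i1.
Proof. by case: i => [[|[|k]]] Hi; [left|right|]; try apply: val_inj. Qed.

Lemma sum2 (R : nmodType) (F : 'I_2 -> R) : \sum_(i < 2) F i = F i0 + F i1.
Proof. rewrite big_ord_recl big_ord1; congr (_ + F _); exact: val_inj. Qed.

Section Mx.
Variable R : comRingType.

Definition mk2 (p q r s : R) : 'M[R]_2 :=
  \matrix_(i, j) if i == i0 then (if j == i0 then p else q) else (if j == i0 then r else s).

Lemma mk2E p q r s :
  [/\ mk2 p q r s i0 i0 = p, mk2 p q r s i0 i1 = q, mk2 p q r s i1 i0 = r & mk2 p q r s i1 i1 = s].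
Proof. by rewrite !mxE. Qed.

Lemma mx2_eq (A B : 'M[R]_2) : A i0 i0 = B i0 i0 -> A i0 i1 = B i0 i1 ->
  A i1 i0 = B i1 i0 -> A i1 i1 = B i1 i1 -> A = B.
Proof.
move=> h1 h2 h3 h4; apply/matrixP => i j.
by case: (ord2P i) => ->; case: (ord2P j) => ->.
Qed.

Lemma mulmx2E (A B : 'M[R]_2) i j : (A *m B) i j = A i i0 * B i0 j + A i i1 * B i1 j.
Proof. by rewrite mxE sum2. Qed.

Lemma det2 (A : 'M[R]_2) : \det A = A i0 i0 * A i1 i1 - A i0 i1 * A i1 i0.
Proof.
rewrite (expand_det_row _ i0) sum2 /cofactor !det_mx11 !mxE /=.
have -> : lift i0 (0 : 'I_1) = i1 by apply: val_inj.
have -> : lift i1 (0 : 'I_1) = i0 by apply: val_inj.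
by rewrite expr0 expr1 mul1r mulN1r mulrN.
Qed.

End Mx.

Section Conj.
Variable R : comUnitRingType.

Definition cycP (A : 'M[R]_2) (x y : R) : 'M[R]_2 :=
  mk2 x (A i0 i0 * x + A i0 i1 * y) y (A i1 i0 * x + A i1 i1 * y).
Definition comp2 (t D : R) : 'M[R]_2 := mk2 0 (- D) 1 t.

Lemma cycP_comm (A : 'M[R]_2) x y :
  A *m cycP A x y = cycP A x y *m comp2 (A i0 i0 + A i1 i1) (A i0 i0 * A i1 i1 - A i0 i1 * A i1 i0).
Proof.
by apply: mx2_eq; rewrite !mulmx2E !mxE /=; ring.
Qed.

Lemma cycP_det (A : 'M[R]_2) x y :
  \det (cycP A x y) = A i1 i0 * x * x + (A i1 i1 - A i0 i0) * x * y - A i0 i1 * y * y.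
Proof. rewrite det2 !mxE /=; ring. Qed.

Lemma inv_comm (A P C : 'M[R]_2) : P \in unitmx -> A *m P = P *m C ->
  invmx P *m A = C *m invmx P.
Proof.
move=> uP AP.
by rewrite -[invmx P *m A]mulmx1 -(mulmxV uP) !mulmxA -(mulmxA _ A) AP mulmxA mulVmx // mul1mx.
Qed.

Lemma conj2 (A B : 'M[R]_2) x y x' y' :
  A i0 i0 + A i1 i1 = B i0 i0 + B i1 i1 ->
  A i0 i0 * A i1 i1 - A i0 i1 * A i1 i0 = B i0 i0 * B i1 i1 - B i0 i1 * B i1 i0 ->
  (A i1 i0 * x * x + (A i1 i1 - A i0 i0) * x * y - A i0 i1 * y * y) \is a GRing.unit ->
  (B i1 i0 * x' * x' + (B i1 i1 - B i0 i0) * x' * y' - B i0 i1 * y' * y') \is a GRing.unit ->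
  exists L L' : 'M[R]_2,
    [/\ L *m A = B *m L, L' *m B = A *m L', L *m L' = 1%:M & L' *m L = 1%:M].
Proof.
move=> ht hd u u'.
set P := cycP A x y; set P' := cycP B x' y'.
have uP : P \in unitmx by rewrite unitmxE cycP_det.
have uP' : P' \in unitmx by rewrite unitmxE cycP_det.
have cA := cycP_comm A x y; have cB := cycP_comm B x' y'.
rewrite ht hd in cA.
have iA := inv_comm uP cA; have iB := inv_comm uP' cB.
exists (P' *m invmx P), (P *m invmx P'); split.
- by rewrite -mulmxA iA mulmxA -cB mulmxA.
- by rewrite -mulmxA iB mulmxA -cA mulmxA.
- by rewrite mulmxA -(mulmxA P') mulVmx // mulmx1 mulmxV.
- by rewrite mulmxA -(mulmxA P) mulVmx // mulmx1 mulmxV.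
Qed.
End Conj.
Lemma act_range n A x : (0 < n)%N -> inZn2 n (act A n x).
Proof.
move=> n0; have nz : n%:Z != 0 by rewrite eqz_nat -lt0n.
have np : 0 < n%:Z by rewrite ltz_nat.
by split; rewrite /= modz_ge0 // ltz_pmod.
Qed.

Lemma iter_range n A x k : (0 < n)%N -> inZn2 n x -> inZn2 n (iter k (act A n) x).
Proof. by move=> n0 hx; case: k => [|k] //=; apply: act_range. Qed.

Section Transfer.
Variables (n : nat) (M M' : 'M[int]_2) (phi psi : pt -> pt).
Hypothesis n0 : (0 < n)%N.
Hypothesis hr : forall x, inZn2 n x -> inZn2 n (phi x).
Hypothesis hc : forall x, phi (act M n x) = act M' n (phi x).
Hypothesis hinv : forall x, inZn2 n x -> psi (phi x) = x.
Hypothesis h0 : phi zero_pt = zero_pt.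

Lemma iter_comm k x : phi (iter k (act M n) x) = iter k (act M' n) (phi x).
Proof. by elim: k => [|k IH] //=; rewrite hc IH. Qed.

Lemma periodic_back y : inZn2 n y -> periodic M' n (phi y) -> periodic M n y.
Proof.
move=> hy [k [k1 hk]]; exists k; split => //.
by rewrite -{2}(hinv hy) -hk -iter_comm hinv //; apply: iter_range.
Qed.

Lemma transfer x : pretail_vertex M n x -> pretail_vertex M' n (phi x).
Proof.
move=> [hx [j [hj hper]]]; split; first exact: hr.
exists j; split; first by rewrite -iter_comm hj.
move=> i hi; rewrite -iter_comm => /periodic_back hp.
by rewrite (hper i hi (hp (iter_range _ _ n0 hx))).
Qed.
End Transfer.

Lemma iso_of n M M' phi psi : (0 < n)%N ->
  (forall x, inZn2 n x -> inZn2 n (phi x)) ->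
  (forall x, phi (act M n x) = act M' n (phi x)) ->
  (forall x, inZn2 n x -> psi (phi x) = x) ->
  phi zero_pt = zero_pt ->
  (forall x, inZn2 n x -> inZn2 n (psi x)) ->
  (forall x, psi (act M' n x) = act M n (psi x)) ->
  (forall x, inZn2 n x -> phi (psi x) = x) ->
  psi zero_pt = zero_pt ->
  pretail_trees_isomorphic M M' n.
Proof.
move=> n0 r1 c1 i1 z1 r2 c2 i2 z2; exists phi; split => //.
- by move=> x; apply: (transfer n0 r1 c1 i1 z1).
- move=> x y [hx _] [hy _] e.
  by rewrite -(i1 _ hx) -(i1 _ hy) e.
- move=> y hy; have [hy' _] := hy; exists (psi y).
    exact: (transfer n0 r2 c2 i2 z2).
  exact: i2 _ hy'.
Qed.

Section Zn.
Variable m : nat.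
Local Notation n := m.+2.
Definition red (z : int) : 'Z_n := z%:~R.
Definition red2 (x : pt) := (red x.1, red x.2).
Definition mv (A : 'M['Z_n]_2) (v : 'Z_n * 'Z_n) :=
  (A i0 i0 * v.1 + A i0 i1 * v.2, A i1 i0 * v.1 + A i1 i1 * v.2).

Lemma red_n : red n%:Z = 0.
Proof. have -> : red n%:Z = (n%:R : 'Z_n) by []. by apply: val_inj; rewrite [LHS](val_Zp_nat (p:=n)) // modnn. Qed.

Lemma red_mod z : red (z %% n%:Z)%Z = red z.
Proof.
have h := red_n; rewrite /red in h.
by rewrite /modz /red intrB intrM h mulr0 subr0.
Qed.

Lemma red_inj z1 z2 : 0 <= z1 < n%:Z -> 0 <= z2 < n%:Z -> red z1 = red z2 -> z1 = z2.
Proof.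
case: z1 => // k1; case: z2 => // k2; rewrite !ltz_nat => /andP[_ h1] /andP[_ h2] e.
have := congr1 val e; rewrite /red /= !val_Zp_nat // !modn_small // => ->.
by [].
Qed.

Lemma red_unit z : coprime `|z|%N n -> red z \is a GRing.unit.
Proof.
case: z => k /= h; rewrite /red.
  by rewrite /= unitZpE // coprime_sym.
by rewrite NegzE rmorphN unitrN /= unitZpE // coprime_sym.
Qed.

Lemma red2_act A x : red2 (act A n x) = mv (map_mx red A) (red2 x).
Proof. by rewrite /red2 /act /mv /= !red_mod !mxE /red !rmorphD !rmorphM. Qed.

Lemma red2_inj x y : inZn2 n x -> inZn2 n y -> red2 x = red2 y -> x = y.
Proof.
case: x => x1 x2; case: y => y1 y2; rewrite /inZn2 /red2 /= => -[h1 h2] [h3 h4] [e1 e2].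
by rewrite (red_inj h1 h3 e1) (red_inj h2 h4 e2).
Qed.

Lemma mv_mul A B v : mv (A *m B) v = mv A (mv B v).
Proof. rewrite /mv !mulmx2E /=; congr (_, _); ring. Qed.

Lemma mv_1 v : mv 1%:M v = v.
Proof. by case: v => a b; rewrite /mv !mxE /=; congr (_, _); ring. Qed.

Definition liftZ (z : 'Z_n) : int := (z : nat)%:Z.

Lemma red_liftZ (L : 'M['Z_n]_2) : map_mx red (map_mx liftZ L) = L.
Proof. by apply/matrixP => i j; rewrite !mxE; exact: natr_Zp. Qed.

Lemma iso_Zn (M M' : 'M[int]_2) (L L' : 'M['Z_n]_2) :
  L *m map_mx red M = map_mx red M' *m L ->
  L' *m map_mx red M' = map_mx red M *m L' ->
  L *m L' = 1%:M -> L' *m L = 1%:M ->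
  pretail_trees_isomorphic M M' n.
Proof.
move=> c1 c2 e1 e2.
have n0 : (0 < n)%N by [].
pose phi := act (map_mx liftZ L) n; pose psi := act (map_mx liftZ L') n.
have hr : forall L0 x, inZn2 n (act L0 n x) by move=> L0 x; apply: act_range.
have z0 : forall L0 : 'M[int]_2, act L0 n zero_pt = zero_pt.
  by move=> L0; rewrite /act /= !mulr0 addr0 mod0z.
have comm : forall (A B : 'M[int]_2) (K : 'M['Z_n]_2),
    K *m map_mx red A = map_mx red B *m K ->
    forall x, act (map_mx liftZ K) n (act A n x) = act B n (act (map_mx liftZ K) n x).
  move=> A B K h x; apply: red2_inj; rewrite ?hr // !red2_act red_liftZ.
  by rewrite -!mv_mul h.
have inv : forall K K' : 'M['Z_n]_2, K *m K' = 1%:M ->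
    forall x, inZn2 n x -> act (map_mx liftZ K) n (act (map_mx liftZ K') n x) = x.
  move=> K K' h x hx; apply: red2_inj; rewrite ?hr // !red2_act !red_liftZ.
  by rewrite -!mv_mul h mv_1.
apply: (@iso_of n M M' phi psi); rewrite /phi /psi;
  first [ done | by move=> x _; apply: hr | exact: z0 | exact: comm c1 | exact: comm c2
        | exact: inv e1 | exact: inv e2 ].
Qed.
End Zn.
Lemma cancel_gg (g X : int) : g != 0 -> g * g * X = 0 -> X = 0.
Proof. by move=> g0 /eqP; rewrite !mulf_eq0 (negbTE g0) /= => /eqP. Qed.

Lemma arith (a b c d a' b' c' d' g be ga de be' ga' de' : int) : g != 0 ->
  b = be*g -> c = ga*g -> d - a = de*g -> b' = be'*g -> c' = ga'*g -> d'-a' = de'*g ->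
  a+d = a'+d' -> a*d-b*c = a'*d'-b'*c' ->
  exists k, [/\ a' = a + g*k, de = de' + 2*k & -(be*ga) = k*(de'+k) - be'*ga'].
Proof.
move=> g0 eb ec hd eb' ec' hd' ht hdet.
have ed : d = a + de * g by rewrite -hd; ring.
have ed' : d' = a' + de' * g by rewrite -hd'; ring.
subst b c b' c' d d'.
have X0 : de*de + 4*(be*ga) - de'*de' - 4*(be'*ga') = 0.
  apply: (cancel_gg g0).
  have -> : g * g * (de*de + 4*(be*ga) - de'*de' - 4*(be'*ga')) =
    ((a + (a + de * g)) - (a' + (a' + de' * g))) * ((a + (a + de * g)) + (a' + (a' + de' * g)))
    - 4 * ((a * (a + de * g) - be * g * (ga * g)) - (a' * (a' + de' * g) - be' * g * (ga' * g))) by ring.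
  by rewrite ht hdet !subrr mul0r mulr0 subr0.
set e := de - de'.
have He := divz_eq e 2; set q := (e %/ 2)%Z in He; set r := (e %% 2)%Z in He.
have r0 : 0 <= r by rewrite modz_ge0.
have r2 : r < 2 by rewrite ltz_pmod.
have P : e * (e + 2 * de') = 4 * (be'*ga' - be*ga).
  have -> : e * (e + 2 * de') = de*de - de'*de' by rewrite /e; ring.
  by move: X0; lia.
have rz : r = 0.
  case: (r =P 0) => // /eqP rn.
  have r1 : r = 1 by lia.
  rewrite He r1 in P.
  have : (q * 2 + 1) * (q * 2 + 1 + 2 * de') = 4*(q*q) + 4*q + 1 + 4*(q*de') + 2*de' by ring.
  lia.
rewrite rz addr0 in He.
exists q; split.
- have : (de' + 2*q)*g = de'*g + 2*(q*g) by ring.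
  have ede : de = de' + 2 * q by rewrite -[de](subrK de') -/e He; ring.
  rewrite ede in ht; lia.
- by rewrite -[de](subrK de') -/e He; ring.
have ede : de = de' + 2 * q by rewrite -[de](subrK de') -/e He; ring.
have ea : a' = a + g * q.
  have : (de' + 2*q)*g = de'*g + 2*(q*g) by ring.
  rewrite ede in ht; lia.
subst a'; rewrite ede in hdet.
apply/eqP; rewrite -subr_eq0; apply/eqP; apply: (cancel_gg g0).
have -> : g * g * (- (be * ga) - (q * (de' + q) - be' * ga')) =
   (a * (a + (de' + 2 * q) * g) - be * g * (ga * g)) -
   ((a + g * q) * (a + g * q + de' * g) - be' * g * (ga' * g)) by ring.
by rewrite hdet subrr.
Qed.

Section Zn2.
Variable m : nat.
Local Notation n := m.+2.

Lemma redD (x y : int) : red m (x + y) = red m x + red m y. Proof. exact: intrD. Qed.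
Lemma redB (x y : int) : red m (x - y) = red m x - red m y. Proof. exact: intrB. Qed.
Lemma redM (x y : int) : red m (x * y) = red m x * red m y. Proof. exact: intrM. Qed.
Lemma redN (x : int) : red m (- x) = - red m x. Proof. exact: intrN. Qed.
Lemma red0 : red m 0 = 0. Proof. exact: rmorph0. Qed.

Lemma shift (L A B : 'M['Z_n]_2) s t : L *m A = B *m L ->
  L *m (s%:M + t *: A) = (s%:M + t *: B) *m L.
Proof.
move=> h; rewrite mulmxDr mulmxDl mul_mx_scalar mul_scalar_mx.
by rewrite -scalemxAr h scalemxAl.
Qed.

Lemma decomp (M : 'M[int]_2) a g d0 be ga de :
  M i0 i0 = a + d0 * g -> M i0 i1 = be * g -> M i1 i0 = ga * g -> M i1 i1 = a + de * g ->
  map_mx (red m) M = (red m a)%:M + (red m g) *: mk2 (red m d0) (red m be) (red m ga) (red m de).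
Proof.
move=> h1 h2 h3 h4; apply: mx2_eq; rewrite !mxE /= ?h1 ?h2 ?h3 ?h4 ?redD ?redM ?mulr1n ?mulr0n; ring.
Qed.
End Zn2.

Lemma prim_of (b c e g be ga de : int) : g != 0 -> g = gcdz (gcdz b c) e ->
  b = be*g -> c = ga*g -> e = de*g ->
  forall p : nat, prime p -> (p%:Z %| ga)%Z -> (p%:Z %| be)%Z -> (p%:Z %| de)%Z -> False.
Proof.
move=> g0 eg eb ec ee p pp h1 h2 h3.
have : (p%:Z * g %| g)%Z.
  by rewrite {1}eg !dvdz_gcd eb ec ee !dvdz_mul ?dvdzz.
rewrite -{1}(mul1r g) dvdz_mul2r // dvdz1 /= => /eqP p1.
by move: pp; rewrite p1.
Qed.


Theorem corollary3p7 (M M' : 'M[int]_2) :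
  \tr M = \tr M' -> \det M = \det M' -> mgcd M = mgcd M' ->
  forall n : nat, (0 < n)%N -> pretail_trees_isomorphic M M' n.
Proof.
move=> ht hd hg n; case: n => [|[|m]] // _.
  have e : forall A x, act A 1 x = zero_pt by move=> A x; rewrite /act !modz1.
  apply: (@iso_of 1 M M' id id) => //= x; by rewrite ?e.
have ht' : M i0 i0 + M i1 i1 = M' i0 i0 + M' i1 i1 by move: ht; rewrite /mxtrace !sum2.
have hd' : M i0 i0 * M i1 i1 - M i0 i1 * M i1 i0 = M' i0 i0 * M' i1 i1 - M' i0 i1 * M' i1 i0.
  by move: hd; rewrite !det2.
have [g0|gn0] := eqVneq (mgcd M) 0.
  have g0' : mgcd M' = 0 by rewrite -hg.
  move: g0 g0'; rewrite /mgcd => /eqP + /eqP; rewrite !gcdz_eq0.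
  move=> /andP[/andP[/eqP b0 /eqP c0] /eqP da] /andP[/andP[/eqP b0' /eqP c0'] /eqP da'].
  have aux : forall a d a' d' : int, a + d = a' + d' -> d - a = 0 -> d' - a' = 0 -> a = a' /\ d = d'.
    by move=> a d a' d' *; split; lia.
  have [h1 h2] := aux _ _ _ _ ht' da da'.
  have eM : M = M' by apply: mx2_eq; rewrite ?h1 ?h2 ?b0 ?b0' ?c0 ?c0'.
  subst M'; apply: (@iso_Zn m M M 1%:M 1%:M); by rewrite ?mul1mx ?mulmx1.
set g := mgcd M.
have gb : (g %| M i0 i1)%Z := dvdz_trans (dvdz_gcdl _ _) (dvdz_gcdl _ _).
have gc : (g %| M i1 i0)%Z := dvdz_trans (dvdz_gcdl _ _) (dvdz_gcdr _ _).
have gd : (g %| M i1 i1 - M i0 i0)%Z := dvdz_gcdr _ _.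
have gb' : (g %| M' i0 i1)%Z by rewrite /g hg; exact: dvdz_trans (dvdz_gcdl _ _) (dvdz_gcdl _ _).
have gc' : (g %| M' i1 i0)%Z by rewrite /g hg; exact: dvdz_trans (dvdz_gcdl _ _) (dvdz_gcdr _ _).
have gd' : (g %| M' i1 i1 - M' i0 i0)%Z by rewrite /g hg; exact: dvdz_gcdr.
set be := (M i0 i1 %/ g)%Z; set ga := (M i1 i0 %/ g)%Z; set de := ((M i1 i1 - M i0 i0) %/ g)%Z.
set be' := (M' i0 i1 %/ g)%Z; set ga' := (M' i1 i0 %/ g)%Z; set de' := ((M' i1 i1 - M' i0 i0) %/ g)%Z.
have eb := esym (divzK gb); have ec := esym (divzK gc); have ed := esym (divzK gd).
have eb' := esym (divzK gb'); have ec' := esym (divzK gc'); have ed' := esym (divzK gd').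
have [k [ea ede edet]] := arith gn0 eb ec ed eb' ec' ed' ht' hd'.
have pr1 := prim_of gn0 (erefl _) eb ec ed.
have pr2 := prim_of gn0 hg eb' ec' ed'.
have [x [y cxy]] := cyc (isT : (0 < m.+2)%N) pr1.
have [x' [y' cxy']] := cyc (isT : (0 < m.+2)%N) pr2.
pose A := mk2 (red m 0) (red m be) (red m ga) (red m de).
pose B := mk2 (red m k) (red m be') (red m ga') (red m (de' + k)).
have T : A i0 i0 + A i1 i1 = B i0 i0 + B i1 i1.
  have ede2 : de = de' + k + k by move: ede; rewrite -/de -/de' => ->; ring.
  by rewrite !mxE /= ede2 !redD red0; ring.
have D : A i0 i0 * A i1 i1 - A i0 i1 * A i1 i0 = B i0 i0 * B i1 i1 - B i0 i1 * B i1 i0.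
  have E := congr1 (red m) edet; rewrite ?redN ?redB ?redM ?redD in E.
  by rewrite !mxE /= red0 mul0r sub0r redD; exact: E.
have U : (A i1 i0 * red m x * red m x + (A i1 i1 - A i0 i0) * red m x * red m y
          - A i0 i1 * red m y * red m y) \is a GRing.unit.
  have u := red_unit cxy; rewrite ?redB ?redD ?redM in u.
  by rewrite !mxE /= red0 subr0.
have U' : (B i1 i0 * red m x' * red m x' + (B i1 i1 - B i0 i0) * red m x' * red m y'
          - B i0 i1 * red m y' * red m y') \is a GRing.unit.
  have u := red_unit cxy'; rewrite ?redB ?redD ?redM in u.
  have -> : B i1 i1 - B i0 i0 = red m de' by rewrite !mxE /= redD; ring.
  by rewrite !mxE.
have [L [L' [c1 c2 e1 e2]]] := conj2 T D U U'.
have h1 : M i0 i0 = M i0 i0 + 0 * g by ring.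
have h4 : M i1 i1 = M i0 i0 + de * g.
  have e0 : M i1 i1 = M i0 i0 + (M i1 i1 - M i0 i0) by ring.
  by rewrite {1}e0 ed.
have h1' : M' i0 i0 = M i0 i0 + k * g by rewrite ea -/g mulrC.
have h4' : M' i1 i1 = M i0 i0 + (de' + k) * g.
  have e0 : M' i1 i1 = M' i0 i0 + (M' i1 i1 - M' i0 i0) by ring.
  by rewrite {1}e0 ed' -/de' ea -/g; ring.
have dM := decomp m h1 eb ec h4.
have dM' := decomp m h1' eb' ec' h4'.
apply: (iso_Zn (L := L) (L' := L')) => //; rewrite dM dM'; apply: shift => //.
Qed.
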